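(* Let $\mathbb{A}$ be an epistemic Heyting algebra and let $i$ be an agent. Then $\lozenge_i\mathbb{A}:=\{\lozenge_i a\mid a\in\mathbb{A}\}$ is a Boolean subalgebra of (the Heyting algebra reduct of) $\mathbb{A}$. Furthermore, setting $\Box_i\mathbb{A}:=\{\Box_i a\mid a\in\mathbb{A}\}$, we have $\lozenge_i\mathbb{A}=\Box_i\mathbb{A}$.
   Context: Fix a set $\mathsf{Ag}$ of agents. A monadic Heyting algebra is a Heyting algebra $\mathbb{L}$ together with, for each $i\in\mathsf{Ag}$, monotone unary operations $\lozenge_i,\Box_i$ on $\mathbb{L}$ such that for all $a,b$: $a\leq\lozenge_i a$; $\Box_i a\leq a$; $\lozenge_i(a\vee b)\leq\lozenge_i a\vee\lozenge_i b$; $\Box_i(a\to b)\leq\Box_i a\to\Box_i b$; $\lozenge_i a\leq\Box_i\lozenge_i a$; $\lozenge_i\Box_i a\leq\Box_i a$; $\Box_i(a\to b)\leq\lozenge_i a\to\lozenge_i b$; $\lozenge_i\bot\leq\bot$; $\top\leq\Box_i\top$. An epistemic Heyting algebra is a finite monadic Heyting algebra such that $\lozenge_i a\vee\neg\lozenge_i a=\top$ for every $i\in\mathsf{Ag}$ and every $a$ (where $\neg x:=x\to\bot$). *)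

(* Defs.v *)
From HB Require Import structures.
From mathcomp Require Import all_boot all_order.
Set Implicit Arguments. Unset Strict Implicit. Unset Printing Implicit Defensive.
Import Order.TTheory.
Local Open Scope order_scope.

Definition heyting_imp d (T : tbLatticeType d) (imp : T -> T -> T) : Prop :=
  forall a b c : T, (c <= imp a b) = (c `&` a <= b).

Definition hneg d (T : tbLatticeType d) (imp : T -> T -> T) (x : T) : T :=
  imp x \bot.

Definition monadic_heyting d (T : tbLatticeType d) (imp : T -> T -> T)
  (Ag : Type) (dia box : Ag -> T -> T) : Prop :=
  heyting_imp imp /\
  forall i : Ag,
  (forall a b : T, a <= b -> dia i a <= dia i b) /\
      (forall a b : T, a <= b -> box i a <= box i b) /\
      (forall a : T, a <= dia i a) /\
      (forall a : T, box i a <= a) /\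
      (forall a b : T, dia i (a `|` b) <= dia i a `|` dia i b) /\
      (forall a b : T, box i (imp a b) <= imp (box i a) (box i b)) /\
      (forall a : T, dia i a <= box i (dia i a)) /\
      (forall a : T, dia i (box i a) <= box i a) /\
      (forall a b : T, box i (imp a b) <= imp (dia i a) (dia i b)) /\
      dia i \bot <= \bot /\
      \top <= box i \top.

(* Epistemic Heyting algebra: a finite monadic Heyting algebra with
   dia i a \/ ~ dia i a = top. Finiteness is carried by T : finTBLatticeType. *)
Definition epistemic_heyting d (T : finTBLatticeType d) (imp : T -> T -> T)
  (Ag : Type) (dia box : Ag -> T -> T) : Prop :=
  monadic_heyting imp dia box /\
  forall (i : Ag) (a : T), dia i a `|` hneg imp (dia i a) = \top.

Definition boolean_subalgebra d (T : tbLatticeType d) (imp : T -> T -> T)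
  (S : T -> Prop) : Prop :=
  S \bot /\ S \top /\
      (forall x y, S x -> S y -> S (x `&` y)) /\
      (forall x y, S x -> S y -> S (x `|` y)) /\
      (forall x y, S x -> S y -> S (imp x y)) /\
      (forall x, S x -> x `|` hneg imp x = \top).

(* Main.v *)
Require Import Defs.
From mathcomp Require Import all_boot all_order.
Local Open Scope order_scope.
Import Order.TTheory.

Theorem fact1 (d : Order.disp_t) (T : finTBLatticeType d) (imp : T -> T -> T)
  (Ag : Type) (dia box : Ag -> T -> T)
  (HA : epistemic_heyting imp dia box) (i : Ag) :
  boolean_subalgebra imp (fun x => exists a : T, x = dia i a) /\
  (forall x : T, (exists a : T, x = dia i a) <-> (exists a : T, x = box i a)).
Proof.
move: HA => [[Himp Hax] Hem].
have [Dm [Bm [Dinf [Bdef [Djn [Bimp [DB [DBox [Bimp2 [Dbot Btop]]]]]]]]]] := Hax i.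
have tr (a b c : T) : a <= b -> b <= c -> a <= c.
  exact: le_trans.
have HI (a b c : T) : c `&` a <= b -> c <= imp a b by rewrite Himp.
have HE (a b c : T) : c <= imp a b -> c `&` a <= b by rewrite Himp.
have BD a : box i (dia i a) = dia i a by apply/le_anti; rewrite Bdef DB.
have DD a : dia i (dia i a) = dia i a.
  apply/le_anti; rewrite Dinf andbT.
  apply: (tr _ _ _ (Dm _ _ (DB a))); apply: (tr _ _ _ (DBox _)); exact: Bdef.
have DBx a : dia i (box i a) = box i a by apply/le_anti; rewrite DBox Dinf.
have memP x : (exists a, x = dia i a) <-> dia i x = x.
  split; [by move=> [a ->]; rewrite DD | by move=> <-; exists x].
have fixle x : dia i x <= x -> exists a, x = dia i a.
  by move=> h; exists x; apply/le_anti; rewrite h Dinf.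
have distr (c a b : T) : c `&` (a `|` b) <= (c `&` a) `|` (c `&` b).
  rewrite meetC -(Himp c) leUx !Himp; apply/andP; split.
    by rewrite meetC leUl.
  by rewrite meetC leUr.
split; last first.
  move=> x; split.
    by move=> [a ->]; exists (dia i a); rewrite BD.
  by move=> [a ->]; exists (box i a); rewrite DBx.
split; first by apply: fixle.
split; first by apply: fixle; rewrite lex1.
split.
  move=> x y /memP hx /memP hy; apply: fixle.
  rewrite lexI; apply/andP; split.
    by apply: (tr _ _ _ (Dm _ _ (leIl x y))); rewrite hx.
  by apply: (tr _ _ _ (Dm _ _ (leIr y x))); rewrite hy.
split.
  move=> x y /memP hx /memP hy; apply: fixle.
  by apply: (tr _ _ _ (Djn _ _)); rewrite hx hy.
split; last by move=> x [a ->]; apply: Hem.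
move=> x y [a ex] /memP hy; apply: fixle.
set c := imp x y.
have emx : x `|` hneg imp x = \top by rewrite ex; apply: Hem.
have nnx : hneg imp (hneg imp x) <= x.
  rewrite -[hneg imp (hneg imp x)]meetx1 -emx.
  apply: (tr _ _ _ (distr _ _ _)); rewrite leUx leIr /=.
  apply: (tr _ _ _ _ (le0x x)).
  by apply: HE; exact: lexx.
have cE : c <= hneg imp x `|` y.
  rewrite -[c]meetx1 -emx; apply: (tr _ _ _ (distr _ _ _)).
  rewrite leUx; apply/andP; split.
    by apply: (tr _ _ _ _ (leUr _ _)); rewrite -Himp.
  exact: (tr _ _ _ (leIr _ _) (leUl _ _)).
have Dn : dia i (hneg imp x) `&` x <= \bot.
  have h1 : x <= box i (hneg imp (hneg imp x)).
    have : box i x = x by rewrite ex BD.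
    move=> bx; rewrite -{1}bx; apply: Bm.
    by rewrite Himp /hneg meetC -Himp.
  have h2 := Bimp2 (hneg imp x) \bot.
  have h3 : x <= imp (dia i (hneg imp x)) (dia i \bot) := tr _ _ _ h1 h2.
  rewrite meetC -Himp; apply: (tr _ _ _ h3).
  rewrite Himp; apply: (tr _ _ _ _ Dbot); rewrite -Himp; exact: lexx.
apply: (tr _ _ _ (Dm _ _ cE)); apply: (tr _ _ _ (Djn _ _)).
rewrite hy leUx; apply/andP; split.
  rewrite Himp; exact: (tr _ _ _ Dn (le0x y)).
by rewrite Himp leIl.
Qed.
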